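(* Let $q$ be a prime power, $e\ge2$, $r_1,\dots,r_{e-1},m>1$ integers, $n=r_{e-1}\cdots r_1m$, and $k$ an integer with $1<k\le m$. Put $N_1=m$ and $N_i=r_{i-1}\cdots r_1m$ for $2\le i\le e$ (so $N_e=n$). Let $\mathcal{C}_1\subseteq\mathcal{G}_q(m,k)$ be a union of finitely many pairwise distinct orbits under $\mathbb{F}_{q^m}^*$. For each $i=2,\dots,e$ let $\Phi_{i,1},\dots,\Phi_{i,s_i}:\mathbb{F}_{q^{N_{i-1}}}\to\mathbb{F}_{q^{N_i}}$ be injective $\mathbb{F}_q$-linear maps such that the subspaces $V_{i,h}=\Phi_{i,h}(\mathbb{F}_{q^{N_{i-1}}})$ have pairwise distinct orbits under $\mathbb{F}_{q^{N_i}}^*$, and let $\mathcal{C}_i=\bigcup_{h=1}^{s_i}\mathrm{Orb}_{\mathbb{F}_{q^{N_i}}^*}(V_{i,h})\subseteq\mathcal{G}_q(N_i,N_{i-1})$ be full-length. Define recursively $\mathcal{D}_1=\mathcal{C}_1$ and, for $2\le i\le e$, $$\mathcal{D}_i=\mathcal{C}_i\odot\mathcal{D}_{i-1}=\{\beta\,\Phi_{i,h}(U):\ \beta\in\mathbb{F}_{q^{N_i}}^*,\ 1\le h\le s_i,\ U\in\mathcal{D}_{i-1}\}\subseteq\mathcal{G}_q(N_i,k).$$ Assume $d(\mathcal{C}_1)=2k-2$ and $d(\mathcal{C}_i)=2N_{i-1}-2$ for every $i=2,\dots,e$. Then $\mathcal{C}:=\mathcal{D}_e=\mathcal{C}_e\odot\cdots\odot\mathcal{C}_1\subseteq\mathcal{G}_q(n,k)$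 is a multi-orbit cyclic subspace code with minimum distance $2k-2$ and $|\mathcal{C}|=\prod_{i=1}^e|\mathcal{C}_i|$.
   Context: For positive integers $k\le N$, $\mathcal{G}_q(N,k)$ is the set of $k$-dimensional $\mathbb{F}_q$-subspaces of $\mathbb{F}_{q^N}$. Subspace distance $d(U,V)=\dim_{\mathbb{F}_q}(U+V)-\dim_{\mathbb{F}_q}(U\cap V)$; $d(\mathcal{C})=\min\{d(U,V):U,V\in\mathcal{C},U\ne V\}$. For $V\in\mathcal{G}_q(N,k)$, $\mathrm{Orb}_{\mathbb{F}_{q^N}^*}(V)=\{\beta V:\beta\in\mathbb{F}_{q^N}^*\}$; a multi-orbit cyclic subspace code is a union of such orbits. A one-orbit code $\mathrm{Orb}_{\mathbb{F}_{q^N}^*}(V)$ is full-length if $\{\beta\in\mathbb{F}_{q^N}^*:\beta V=V\}=\mathbb{F}_q^*$; a union of orbits is full-length if each orbit is. *)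

(* Defs.v *)
From HB Require Import structures.
From mathcomp Require Import all_boot all_order all_algebra all_field.
From mathcomp Require Import finmap.
Set Implicit Arguments. Unset Strict Implicit. Unset Printing Implicit Defensive.
Import GRing.Theory.
Local Open Scope ring_scope.
Local Open Scope fset_scope.

(* F plays the role of F_q (q = #|F|); a field extension L of F with
   \dim {:L} = N plays the role of F_{q^N}; F_q-subspaces of F_{q^N} are
   {vspace L}; beta * V is the product space (<[beta]> * V)%VS. *)

Section Defs.
Variable F : finFieldType.

Definition orb (L : fieldExtType F) (V : {vspace L}) : {fset {vspace L}} :=
  seq_fset tt [seq ((<[(b : L)]> * V)%VS) | b <- enum [pred x : finvect_type L | x != 0]].

Definition sdist (L : fieldExtType F) (U V : {vspace L}) : nat :=
  (\dim (U + V) - \dim (U :&: V))%N.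

Definition min_dist (L : fieldExtType F) (C : {fset {vspace L}}) (d : nat) : Prop :=
  (exists U V, [/\ U \in C, V \in C, U != V & sdist U V = d]) /\
  (forall U V, U \in C -> V \in C -> U != V -> (d <= sdist U V)%N).

(* the one-orbit code Orb(V) is full-length: stabilizer of V is F_q^* *)
Definition full_length (L : fieldExtType F) (V : {vspace L}) : Prop :=
  forall b : L, b != 0 -> ((<[b]> * V)%VS == V) = (b \in 1%VS).

Definition orbits_union (L : fieldExtType F) (s : nat) (V : nat -> {vspace L})
  : {fset {vspace L}} := \bigcup_(h <- iota 0 s) orb (V h).

Definition odot (L L' : fieldExtType F) (s : nat) (Phi : nat -> 'Hom(L, L'))
  (D : {fset {vspace L}}) : {fset {vspace L'}} :=
  \bigcup_(h <- iota 0 s) \bigcup_(U <- D) orb (Phi h @: U)%VS.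

Definition multi_orbit_cyclic (L : fieldExtType F) (C : {fset {vspace L}}) : Prop :=
  exists Vs : seq {vspace L}, C = \bigcup_(V <- Vs) orb V.

(* L : nat -> fields, with L i standing for F_{q^{N_i}} (1 <= i <= e);
   Phi i h : L i -> L (i+1) stands for Phi_{i+1,h+1}, h < s i.
   D i stands for D_{i+1}. *)
Fixpoint Dcode (L : nat -> fieldExtType F) (s : nat -> nat)
  (Phi : forall i, nat -> 'Hom(L i, L i.+1)) (C1 : {fset {vspace L 1%N}}) (i : nat)
  : {fset {vspace L i.+1}} :=
  match i with
  | 0 => C1
  | j.+1 => odot (s j.+1) (Phi j.+1) (Dcode s Phi C1 j)
  end.
End Defs.

(* Main.v *)
Require Import Defs.
From HB Require Import structures.
From mathcomp Require Import all_boot all_order all_algebra all_field.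
From mathcomp Require Import finmap.
From mathcomp Require Import zify.
Set Implicit Arguments. Unset Strict Implicit. Unset Printing Implicit Defensive.
Import GRing.Theory.
Local Open Scope ring_scope.
Local Open Scope fset_scope.

Section Aux.
Variable F : finFieldType.

Section OneField.
Variable L : fieldExtType F.
Implicit Types X Y V : {vspace L}.

Lemma dim_lmul b X : b != 0 -> \dim (<[b]> * X)%VS = \dim X.
Proof. by move=> nz; rewrite prodvC dim_cosetv. Qed.

Lemma lmulM b c X : (<[b]> * (<[c]> * X) = <[b * c]> * X)%VS.
Proof. by rewrite prodvA prodv_line. Qed.

Lemma lmul1 X : (<[1]> * X)%VS = X.
Proof. exact: prod1v. Qed.

Lemma lmul_cancel b X Y : b != 0 -> (<[b]> * X = <[b]> * Y)%VS -> X = Y.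
Proof.
move=> nz E; rewrite -(lmul1 X) -(mulVf nz) -lmulM E lmulM mulVf // lmul1 //.
Qed.

Lemma lmul_scalar l X : l \in 1%VS -> l != 0 -> (<[l]> * X)%VS = X.
Proof.
move=> l1 nz; suff -> : <[l]>%VS = 1%VS by rewrite prod1v.
apply/eqP; rewrite eqEdim -memvE l1 /= dimv1 dim_vline nz //.
Qed.

Lemma sdist_lmul b X Y : b != 0 ->
  sdist (<[b]> * X)%VS (<[b]> * Y)%VS = sdist X Y.
Proof.
move=> nz; rewrite /sdist.
have := dimv_sum_cap (<[b]> * X)%VS (<[b]> * Y)%VS; have := dimv_sum_cap X Y.
rewrite -prodvDr !dim_lmul // => h1 h2; congr (_ - _)%N; apply: (@addnI (\dim (X + Y))); rewrite h1 h2 //.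
Qed.

Lemma orbP X V : reflect (exists2 b, b != 0 & X = (<[b]> * V)%VS) (X \in orb V).
Proof.
rewrite /orb seq_fsetE; apply: (iffP mapP) => [[b]|[b nz ->]].
  by rewrite (@mem_enum (finvect_type L)) => nz ->; exists b.
by exists b => //; rewrite (@mem_enum (finvect_type L)).
Qed.

Lemma orb_lmul b V : b != 0 -> orb (<[b]> * V)%VS = orb V.
Proof.
move=> nz; apply/fsetP => X; apply/orbP/orbP => [[c nzc ->]|[c nzc ->]].
  by exists (c * b); rewrite ?mulf_neq0 ?lmulM.
exists (c / b); rewrite ?mulf_neq0 ?invr_eq0 // lmulM mulfVK //.
Qed.

Lemma orb_self V : V \in orb V.
Proof. by apply/orbP; exists 1; rewrite ?oner_eq0 ?lmul1. Qed.

Lemma dim_orb X V : X \in orb V -> \dim X = \dim V.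
Proof. by case/orbP => b nz ->; rewrite dim_lmul. Qed.

Lemma orbits_unionP s (V : nat -> {vspace L}) X :
  reflect (exists h, (h < s)%N /\ exists2 b, b != 0 & X = (<[b]> * V h)%VS)
          (X \in orbits_union s V).
Proof.
apply: (iffP (bigfcupP _ _ _ _)) => [[h /andP[hs _] /orbP Xo]|[h [hs Xo]]].
  by exists h; split => //; move: hs; rewrite mem_iota.
by exists h; [rewrite mem_iota hs | apply/orbP].
Qed.

End OneField.

Section TwoFields.
Variables K L : fieldExtType F.
Implicit Types f : 'Hom(K, L).

Lemma dim_limg_inj f X : injective f -> \dim (f @: X)%VS = \dim X.
Proof.
by move=> /lker0P /eqP k0; apply: limg_dim_eq; rewrite k0 capv0.
Qed.

Lemma sdist_limg f X Y : injective f -> sdist (f @: X)%VS (f @: Y)%VS = sdist X Y.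
Proof.
move=> inj; rewrite /sdist.
have := dimv_sum_cap (f @: X)%VS (f @: Y)%VS; have := dimv_sum_cap X Y.
rewrite -limgD !dim_limg_inj // => h1 h2; congr (_ - _)%N; apply: (@addnI (\dim (X + Y))); rewrite h1 h2 //.
Qed.

Lemma limg_cancel f X Y : injective f -> (f @: X)%VS = (f @: Y)%VS -> X = Y.
Proof. by move=> /lker0P k0 E; apply/eqP; rewrite -(eq_limg_ker0 _ _ k0) E. Qed.

Lemma odotP s (Phi : nat -> 'Hom(K, L)) D X :
  reflect (exists h, (h < s)%N /\ exists2 U, U \in D & exists2 b, b != 0 & X = (<[b]> * (Phi h @: U))%VS)
          (X \in odot s Phi D).
Proof.
apply: (iffP (bigfcupP _ _ _ _)) => [[h /andP[hs _] /bigfcupP [U /andP[UD _] /orbP Xo]]|[h [hs [U UD Xo]]]].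
  by exists h; split; [move: hs; rewrite mem_iota | exists U].
exists h; first by rewrite mem_iota hs.
by apply/bigfcupP; exists U; [rewrite UD | apply/orbP].
Qed.
End TwoFields.
Lemma card_fsetM (K K' : choiceType) (A : {fset K}) (B : {fset K'}) :
  #|` A `*` B| = (#|` A| * #|` B|)%N.
Proof.
rewrite /fsetM unlock size_seq_fset undup_id ?size_allpairs //.
apply: allpairs_uniq => //; first exact: fset_uniq. exact: fset_uniq.
by move=> [? ?] [? ?] _ _ [-> ->].
Qed.

Lemma card_fact (I J W Y : choiceType) (a0 : I) (A : {fset I}) (D : {fset J})
  (S : I -> W) (T : I -> J -> Y) :
  (forall a a' u u', a \in A -> a' \in A -> u \in D -> u' \in D ->
     (T a u == T a' u') = (S a == S a') && (u == u')) ->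
  #|` [fset T a u | a in A, u in D]| = (#|` [fset S a | a in A]| * #|` D|)%N.
Proof.
move=> HT; set SA := [fset S a | a in A].
pose rep w := nth a0 A (find (fun a => S a == w) A).
have repP : forall w, w \in SA -> rep w \in A /\ S (rep w) = w.
  move=> w /imfsetP [a aA ->].
  have hs : has (fun x => S x == S a) A by apply/hasP; exists a.
  split; first by rewrite /rep mem_nth // -has_find.
  by apply/eqP; exact: (nth_find a0 hs).
pose G (p : W * J) := T (rep p.1) p.2.
have -> : [fset T a u | a in A, u in D] = [fset G p | p in SA `*` D].
  apply/fsetP => y; apply/imfset2P/imfsetP.
    move=> [a aA [u uD ->]]; exists (S a, u).
      by rewrite in_fsetM /= uD andbT; apply/imfsetP; exists a.
    have [rA rS] := repP (S a) (in_imfset _ _ aA).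
    by apply/eqP; rewrite /G /= HT // rS !eqxx.
  move=> [[w u]]; rewrite in_fsetM /= => /andP[wS uD] ->.
  by exists (rep w); [exact: (repP w wS).1 | exists u].
rewrite card_in_imfset; last first.
  move=> [w u] [w' u']; rewrite /= !in_fsetM /= => /andP[wS uD] /andP[wS' uD'].
  rewrite /G /= => /eqP; rewrite HT ?(repP _ wS).1 ?(repP _ wS').1 //.
  by rewrite (repP _ wS).2 (repP _ wS').2 => /andP[/eqP -> /eqP ->].
by rewrite -card_fsetM.
Qed.

Lemma dim_cap_sum (K0 : fieldType) (vT : vectType K0) (X Y : {vspace vT}) :
  (\dim (X :&: Y) <= \dim (X + Y))%N.
Proof. exact: dimvS (subv_trans (capvSl _ _) (addvSl _ _)). Qed.

Lemma arith_cap n p c : (c <= p)%N -> (p + c = n + n)%N -> (2 * n - 2 <= p - c)%N -> (c <= 1)%N.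
Proof. lia. Qed.

Section Step.
Variables K L : fieldExtType F.
Variables (s : nat) (Phi : nat -> 'Hom(K, L)) (D : {fset {vspace K}}) (k : nat).
Let V h := (Phi h @: fullv)%VS.
Hypothesis Hk : (1 < k)%N.
Hypothesis HD : forall U, U \in D -> \dim U = k.
Hypothesis HDd : min_dist D (2 * k - 2).
Hypothesis Hinj : forall h, (h < s)%N -> injective (Phi h).
Hypothesis Horb : forall h h', (h < s)%N -> (h' < s)%N -> h != h' -> orb (V h) != orb (V h').
Hypothesis Hfl : forall h, (h < s)%N -> full_length (V h).
Hypothesis HC : min_dist (orbits_union s V) (2 * \dim {: K} - 2).

Lemma dimV h : (h < s)%N -> \dim (V h) = \dim {: K}.
Proof. by move=> hs; rewrite /V dim_limg_inj //; apply: Hinj. Qed.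

Lemma cap_le1 h h' b b' : (h < s)%N -> (h' < s)%N -> b != 0 -> b' != 0 ->
  (<[b]> * V h)%VS != (<[b']> * V h')%VS ->
  (\dim ((<[b]> * V h) :&: (<[b']> * V h')) <= 1)%N.
Proof.
move=> hs hs' nz nz' ne.
have m1 : (<[b]> * V h)%VS \in orbits_union s V.
  by apply/orbits_unionP; exists h; split => //; exists b.
have m2 : (<[b']> * V h')%VS \in orbits_union s V.
  by apply/orbits_unionP; exists h'; split => //; exists b'.
have := HC.2 _ _ m1 m2 ne.
have := dimv_sum_cap (<[b]> * V h)%VS (<[b']> * V h')%VS.
rewrite /sdist !dim_lmul // !dimV //.
move=> E1 E2; apply: arith_cap E1 E2.
exact: dimvS (subv_trans (capvSl _ _) (addvSl _ _)).
Qed.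

Lemma S_eq h h' b b' : (h < s)%N -> (h' < s)%N -> b != 0 -> b' != 0 ->
  (<[b]> * V h)%VS = (<[b']> * V h')%VS ->
  h = h' /\ (forall X : {vspace L}, (<[b]> * X)%VS = (<[b']> * X)%VS).
Proof.
move=> hs hs' nz nz' E.
have hh : h = h'.
  case: (eqVneq h h') => // ne; move: (Horb hs hs' ne).
  by rewrite -(orb_lmul (V h) nz) -(orb_lmul (V h') nz') E eqxx.
subst h'; split => // X.
set c := b^-1 * b'.
have cnz : c != 0 by rewrite mulf_neq0 ?invr_eq0.
have cV : (<[c]> * V h)%VS = V h by rewrite /c -lmulM -E lmulM mulVf // lmul1.
have c1 : c \in 1%VS by rewrite -(Hfl hs cnz) cV eqxx.
have bc : b * c = b' by rewrite /c mulrA mulfV // mul1r.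
by rewrite -bc -lmulM (lmul_scalar _ c1 cnz).
Qed.

Lemma T_sub h b U : (<[b]> * (Phi h @: U) <= <[b]> * V h)%VS.
Proof. by apply: prodvSr; apply: limgS; apply: subvf. Qed.

Lemma dimT h b U : (h < s)%N -> b != 0 -> U \in D ->
  \dim (<[b]> * (Phi h @: U))%VS = k.
Proof. by move=> hs nz UD; rewrite dim_lmul // dim_limg_inj ?HD //; apply: Hinj. Qed.

Lemma T_eq h h' b b' U U' : (h < s)%N -> (h' < s)%N -> b != 0 -> b' != 0 ->
  U \in D -> U' \in D ->
  (<[b]> * (Phi h @: U))%VS = (<[b']> * (Phi h' @: U'))%VS ->
  (<[b]> * V h)%VS = (<[b']> * V h')%VS /\ U = U'.
Proof.
move=> hs hs' nz nz' UD UD' E.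
have SE : (<[b]> * V h)%VS = (<[b']> * V h')%VS.
  apply/eqP; apply: contraTT Hk => ne.
  have c1 := cap_le1 hs hs' nz nz' ne.
  have sub : ((<[b]> * (Phi h @: U)) <= (<[b]> * V h) :&: (<[b']> * V h'))%VS.
    by rewrite subv_cap T_sub E T_sub.
  have := dimvS sub; rewrite dimT // => le.
  by rewrite -leqNgt (leq_trans le c1).
split=> //.
have [hh X] := S_eq hs hs' nz nz' SE; subst h'.
rewrite X in E; have := lmul_cancel nz' E.
exact: limg_cancel (Hinj hs).
Qed.

Let NZ : {fset L} := seq_fset tt [seq (b : L) | b <- enum [pred x : finvect_type L | x != 0]].

Lemma inNZ b : (b \in NZ) = (b != 0).
Proof.
rewrite seq_fsetE; apply/mapP/idP => [[c]|nz].
  by rewrite (@mem_enum (finvect_type L)) => nz ->.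
by exists b => //; rewrite (@mem_enum (finvect_type L)).
Qed.

Let A := NZ `*` seq_fset tt (iota 0 s).

Lemma inA a : (a \in A) = (a.1 != 0) && (a.2 < s)%N.
Proof. by rewrite in_fsetM inNZ seq_fsetE mem_iota add0n. Qed.

Lemma orbits_eq : orbits_union s V = [fset (<[a.1]> * V a.2)%VS | a in A].
Proof.
apply/fsetP => X; apply/orbits_unionP/imfsetP.
  by move=> [h [hs [b nz ->]]]; exists (b, h); rewrite // inA /= nz hs.
by move=> [[b h]]; rewrite inA /= => /andP[nz hs] ->; exists h; split => //; exists b.
Qed.

Lemma odot_eq : odot s Phi D = [fset (<[a.1]> * (Phi a.2 @: U))%VS | a in A, U in D].
Proof.
apply/fsetP => X; apply/odotP/imfset2P.
  move=> [h [hs [U UD [b nz ->]]]]; exists (b, h); first by rewrite inA /= nz hs.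
  by exists U.
move=> [[b h]]; rewrite inA /= => /andP[nz hs] [U UD ->].
by exists h; split => //; exists U => //; exists b.
Qed.

Lemma arith2 p c k0 : (p + c = k0 + k0)%N -> (c <= 1)%N -> (2 * k0 - 2 <= p - c)%N.
Proof. lia. Qed.

Lemma step :
  [/\ forall X, X \in odot s Phi D -> \dim X = k,
      min_dist (odot s Phi D) (2 * k - 2)
    & #|` odot s Phi D| = (#|` orbits_union s V| * #|` D|)%N].
Proof.
split.
- by move=> X /odotP [h [hs [U UD [b nz ->]]]]; apply: dimT.
- split.
  + have [U [U' [UD UD' ne dU]]] := HDd.1.
    have [W [_ [WC _ _ _]]] := HC.1.
    have [h [hs _]] := orbits_unionP _ _ _ WC.
    have nz1 : (1 : L) != 0 by rewrite oner_eq0.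
    exists (<[1]> * (Phi h @: U))%VS, (<[1]> * (Phi h @: U'))%VS; split.
    * by apply/odotP; exists h; split => //; exists U => //; exists 1.
    * by apply/odotP; exists h; split => //; exists U' => //; exists 1.
    * apply/eqP => E; have [_ UU] := T_eq hs hs nz1 nz1 UD UD' E.
      by rewrite UU eqxx in ne.
    * by rewrite sdist_lmul // sdist_limg //; apply: Hinj.
  + move=> X Y /odotP [h [hs [U UD [b nz ->]]]] /odotP [h' [hs' [U' UD' [b' nz' ->]]]] ne.
    case: (eqVneq (<[b]> * V h)%VS (<[b']> * V h')%VS) => SE.
      have [hh Xf] := S_eq hs hs' nz nz' SE; subst h'.
      rewrite Xf sdist_lmul // sdist_limg; last exact: Hinj.
      apply: HDd.2 => //; apply/eqP => UU; subst U'.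
      by rewrite Xf eqxx in ne.
    have c1 := cap_le1 hs hs' nz nz' SE.
    have le := dimvS (capvS (T_sub h b U) (T_sub h' b' U')).
    have := dimv_sum_cap (<[b]> * (Phi h @: U))%VS (<[b']> * (Phi h' @: U'))%VS.
    rewrite /sdist !dimT // => E; apply: arith2 E _.
    exact: leq_trans le c1.
- rewrite orbits_eq odot_eq.
  apply: (@card_fact _ _ _ _ (0 : L, 0%N) A D (fun a => (<[a.1]> * V a.2)%VS)
      (fun a U => (<[a.1]> * (Phi a.2 @: U))%VS)).
  move=> [b h] [b' h'] U U'; rewrite !inA /= => /andP[nz hs] /andP[nz' hs'] UD UD'.
  apply/eqP/andP => [E|[/eqP SE /eqP <-]].
    by have [-> ->] := T_eq hs hs' nz nz' UD UD' E.
  by have [<- Xf] := S_eq hs hs' nz nz' SE; rewrite Xf.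
Qed.
End Step.

Lemma odot_moc (K L : fieldExtType F) s (Phi : nat -> 'Hom(K, L)) (D : {fset {vspace K}}) :
  multi_orbit_cyclic (odot s Phi D).
Proof.
exists [seq (Phi h @: U)%VS | h <- iota 0 s, U <- enum_fset D].
apply/fsetP => X; apply/odotP/bigfcupP.
  move=> [h [hs [U UD [b nz ->]]]]; exists (Phi h @: U)%VS.
    by rewrite andbT; apply/allpairsP; exists (h, U); rewrite /= mem_iota hs.
  by apply/orbP; exists b.
move=> [W /andP[/allpairsP [[h U] [hin Uin ->]] _] /orbP [b nz ->]].
by exists h; split; [move: hin; rewrite mem_iota | exists U => //; exists b].
Qed.
End Aux.

Unset Implicit Arguments.
Set Strict Implicit.
Set Printing Implicit Defensive.

Theorem theorem2p19 (F : finFieldType) (e m k : nat) (r : nat -> nat)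
  (L : nat -> fieldExtType F)
  (s1 : nat) (V1 : nat -> {vspace L 1%N})
  (s : nat -> nat) (Phi : forall i, nat -> 'Hom(L i, L i.+1)) :
  let N := fun i : nat => (m * \prod_(1 <= j < i) r j)%N in
  (2 <= e)%N -> (1 < m)%N ->
  (forall i, (1 <= i < e)%N -> (1 < r i)%N) ->
  (1 < k <= m)%N ->
  (forall i, (1 <= i <= e)%N -> \dim {: L i} = N i) ->
  (* C_1 : union of pairwise distinct orbits of k-dim subspaces of F_{q^m} *)
  (forall h, (h < s1)%N -> \dim (V1 h) = k) ->
  (forall h h', (h < s1)%N -> (h' < s1)%N -> h != h' -> orb (V1 h) != orb (V1 h')) ->
  (* C_{i+1} for 1 <= i <= e-1 *)
  (forall i h, (1 <= i < e)%N -> (h < s i)%N -> injective (Phi i h)) ->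
  (forall i h h', (1 <= i < e)%N -> (h < s i)%N -> (h' < s i)%N -> h != h' ->
     orb (Phi i h @: fullv)%VS != orb (Phi i h' @: fullv)%VS) ->
  (forall i h, (1 <= i < e)%N -> (h < s i)%N -> full_length (Phi i h @: fullv)%VS) ->
  (* distance hypotheses *)
  min_dist (orbits_union s1 V1) (2 * k - 2) ->
  (forall i, (1 <= i < e)%N ->
     min_dist (orbits_union (s i) (fun h => (Phi i h @: fullv)%VS)) (2 * N i - 2)) ->
  let C := Dcode s Phi (orbits_union s1 V1) e.-1 in
  [/\ (forall U, U \in C -> \dim U = k),
      multi_orbit_cyclic C,
      min_dist C (2 * k - 2)
    & #|` C| = (#|` orbits_union s1 V1| *
         \prod_(1 <= i < e) #|` orbits_union (s i) (fun h => (Phi i h @: fullv)%VS)|)%N].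
Proof.
move=> N he hm hr hk hdim hV1 hV1o hinj horb hfl hC1 hCi C.
case/andP: hk => hk1 _.
set C1 := orbits_union s1 V1.
have IH : forall j, (j < e)%N ->
  [/\ forall U, U \in Dcode s Phi C1 j -> \dim U = k,
      min_dist (Dcode s Phi C1 j) (2 * k - 2)
    & #|` Dcode s Phi C1 j| = (#|` C1| *
         \prod_(1 <= i < j.+1) #|` orbits_union (s i) (fun h => (Phi i h @: fullv)%VS)|)%N].
  elim => [_|j IHj je].
    split => //=.
      by move=> U /orbits_unionP [h [hs [b nz ->]]]; rewrite dim_lmul // hV1.
    by rewrite big_geq // muln1.
  have [d1 d2 d3] := IHj (ltnW je).
  have j1 : (1 <= j.+1 < e)%N by rewrite je.
  have HC : min_dist (orbits_union (s j.+1) (fun h => (Phi j.+1 h @: fullv)%VS))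
      (2 * \dim {: L j.+1} - 2).
    by rewrite hdim ?(ltnW je) //; apply: hCi.
  have [s1' s2' s3'] := step hk1 d1 d2 (fun h hs => hinj _ h j1 hs)
    (fun h h' hs hs' => horb _ h h' j1 hs hs') (fun h hs => hfl _ h j1 hs) HC.
  split => //=.
  by rewrite s3' d3 [in RHS]big_nat_recr //= mulnC -mulnA.
have e1 : (e.-1 < e)%N by rewrite prednK ?ltnSn // ltnW.
have [d1 d2 d3] := IH e.-1 e1.
have moc : forall j, multi_orbit_cyclic (Dcode s Phi C1 j).
  case => [|j] /=; last exact: odot_moc.
  by exists (map V1 (iota 0 s1)); rewrite /C1 /orbits_union big_map.
split => //; rewrite /C //.
by rewrite d3 prednK // ltnW.
Qed.
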